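(* Let $h\in R$ and let $x$ be the binary representation of $h$, and suppose $x\ne 1001000$. Then every occurrence of $1000$ as a contiguous substring of $x$ starts at the first position of $x$ (i.e. $1000$ can occur in $x$ only as a prefix).
   Context: Stern's sequence $(a(n))_{n\ge0}$: $a(0)=0$, $a(1)=1$, $a(2n)=a(n)$, $a(2n+1)=a(n)+a(n+1)$; $s(n)=a(n+1)$ for $n\ge0$. $R$ is the set of record-setters of $s$, i.e. indices $v\ge0$ with $s(i)<s(v)$ for all $i<v$. The binary representation of a positive integer has no leading zeros; $0$ is represented by the string $0$. *)

(* Defs.v *)
From mathcomp Require Import all_boot.
Set Implicit Arguments. Unset Strict Implicit. Unset Printing Implicit Defensive.

(* Stern's sequence via fuel: for n >= 2 both recursive arguments n./2 and
   n./2.+1 are < n, so fuel n suffices. *)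
Fixpoint stern_fuel (k n : nat) : nat :=
  match k with
  | 0 => n
  | k'.+1 =>
      if n <= 1 then n
      else if odd n then stern_fuel k' n./2 + stern_fuel k' n./2.+1
      else stern_fuel k' n./2
  end.

Definition stern (n : nat) : nat := stern_fuel n n.

Definition stern_s (n : nat) : nat := stern n.+1.

Definition record_setter (v : nat) : Prop := forall i, i < v -> stern_s i < stern_s v.

(* binary digits, most significant first (true = 1) *)
Fixpoint bin_fuel (k n : nat) : seq bool :=
  match k with
  | 0 => [::]
  | k'.+1 => if n is 0 then [::] else rcons (bin_fuel k' n./2) (odd n)
  end.

Definition binrep (n : nat) : seq bool :=
  if n == 0 then [:: false] else bin_fuel n n.

(* w occurs in x starting at (0-based) position i *)
Definition occurs_at (w x : seq bool) (i : nat) : bool :=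
  (i + size w <= size x) && (take (size w) (drop i x) == w).

(* Main.v *)
Require Import Defs.
From mathcomp Require Import all_boot.
From mathcomp Require Import zify.
Set Implicit Arguments. Unset Strict Implicit. Unset Printing Implicit Defensive.

Lemma fuel_eq k1 k2 n : n <= k1 -> n <= k2 -> stern_fuel k1 n = stern_fuel k2 n.
Proof.
elim: k1 k2 n => [|k1 IH] k2 n.
  by rewrite leqn0 => /eqP -> _; case: k2.
case: k2 => [|k2]; first by move=> _; rewrite leqn0 => /eqP ->.
move=> h1 h2 /=; case: ifP => // Hn.
have Hh : n./2 < n by rewrite -divn2 ltn_Pdiv //; lia.
case: ifP => Ho.
- have Hh1 : n./2.+1 < n.
    by move: (odd_double_half n); rewrite Ho -!addnn; lia.
  by rewrite (IH k2 n./2) ?(IH k2 n./2.+1) //; lia.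
- by rewrite (IH k2) //; lia.
Qed.

Lemma stern_fuelE k n : n <= k -> stern_fuel k n = stern n.
Proof. by move=> h; rewrite /stern (@fuel_eq k n n). Qed.

Lemma fuelS k n : 1 < n ->
  stern_fuel k.+1 n = if odd n then stern_fuel k n./2 + stern_fuel k n./2.+1
                      else stern_fuel k n./2.
Proof. by move=> h /=; rewrite ifF //; apply/negbTE; rewrite -ltnNge. Qed.

Lemma sternS n : 1 < n ->
  stern n = if odd n then stern n./2 + stern n./2.+1 else stern n./2.
Proof.
move=> h; rewrite /stern -{1}(prednK (ltnW h)) fuelS ?prednK //; try lia.
have Hh : n./2 < n by rewrite -divn2 ltn_Pdiv //; lia.
case: ifP => Ho.
- have Hh1 : n./2.+1 < n.
    by move: (odd_double_half n); rewrite Ho -!addnn; lia.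
  by rewrite !stern_fuelE //; lia.
- by rewrite !stern_fuelE //; lia.
Qed.

Lemma stern_even n : stern n.*2 = stern n.
Proof.
case: n => // n.
by rewrite sternS ?odd_double ?doubleK //; lia.
Qed.

Lemma stern_odd n : stern (n.*2.+1) = stern n + stern n.+1.
Proof.
case: n => // n.
rewrite sternS /= ?odd_double /=; last by lia.
by rewrite uphalf_double.
Qed.


Definition b0 := false.
Definition b1 := true.

Definition step (b : bool) (p : nat * nat) : nat * nat :=
  if b then (p.1 + p.2, p.2) else (p.1, p.1 + p.2).
Definition app (s : seq bool) (p : nat * nat) := foldl (fun q b => step b q) p s.

Fixpoint ltb (a b : seq bool) : bool :=
  match a, b with
  | x :: a', y :: b' => (~~ x && y) || ((x == y) && ltb a' b')
  | _, _ => false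
  end.

Definition gep (trail : bool) (p q : nat * nat) :=
  if trail then q.2 <= p.2 else (q.1 <= p.1) && (q.2 <= p.2).

Definition domok (lead trail : bool) (bp b : seq bool) :=
  gep trail (app bp (0,1)) (app b (0,1)) && (lead || gep trail (app bp (1,0)) (app b (1,0))).

Fixpoint allbits (n : nat) : seq (seq bool) :=
  if n is k.+1 then [seq x :: s | x <- [:: false; true], s <- allbits k] else [:: [::]].

Definition P1000 := [:: true; false; false; false].
Definition P0000 := [:: false; false; false; false].
Definition table : seq (seq bool) := [::
[:: b0; b0; b0; b1; b0; b0; b1; b0; b1; b1; b0];
[:: b0; b0; b0; b1; b0; b0; b1; b0; b1; b1; b0; b1; b0];
[:: b0; b0; b0; b1; b0; b0; b1; b0; b1; b1; b1; b0; b1];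
[:: b0; b0; b0; b1; b0; b0; b1; b1; b0; b0; b0; b0];
[:: b0; b0; b0; b1; b0; b1; b0; b0; b1; b0; b0];
[:: b0; b0; b0; b1; b0; b1; b0; b0; b1; b0; b1; b0; b1];
[:: b0; b0; b0; b1; b0; b1; b0; b0; b1; b1; b0; b1; b0];
[:: b0; b0; b0; b1; b0; b1; b0; b1; b0; b0; b0; b0];
[:: b0; b0; b0; b1; b0; b1; b1; b0; b1; b1; b0];
[:: b0; b0; b0; b1; b0; b1; b1; b0; b1; b1; b0; b1; b0];
[:: b0; b0; b0; b1; b0; b1; b1; b0; b1; b1; b1; b0; b1];
[:: b0; b0; b0; b1; b0; b1; b1; b1; b0; b0; b0; b0];
[:: b0; b0; b0; b1; b1; b0; b0; b0; b1; b0; b1; b0; b1];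
[:: b0; b0; b0; b1; b1; b0; b0; b0; b1; b1; b0; b1; b0];
[:: b0; b0; b0; b1; b1; b0; b0; b1; b0; b0; b0; b0];
[:: b0; b0; b0; b1; b1; b0; b1; b0; b1; b1; b0];
[:: b0; b0; b0; b1; b1; b0; b1; b0; b1; b1; b0; b1; b0];
[:: b0; b0; b0; b1; b1; b0; b1; b0; b1; b1; b1; b0; b1];
[:: b0; b0; b0; b1; b1; b0; b1; b1; b0; b0; b0; b0];
[:: b0; b0; b0; b1; b1; b1; b0; b0; b1; b0; b0];
[:: b0; b0; b0; b1; b1; b1; b0; b0; b1; b1; b0; b0; b1];
[:: b0; b0; b0; b1; b1; b1; b0; b0; b1; b1; b0; b1; b0];
[:: b0; b0; b0; b1; b1; b1; b0; b1; b0; b0; b0; b0];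
[:: b0; b0; b0; b1; b1; b1; b1; b0; b1; b1; b0];
[:: b0; b0; b0; b1; b1; b1; b1; b0; b1; b1; b0; b1; b0];
[:: b0; b0; b0; b1; b1; b1; b1; b0; b1; b1; b1; b0; b1];
[:: b0; b0; b0; b1; b1; b1; b1; b1; b0; b0; b0; b0];
[:: b0; b0; b1; b0; b0; b1; b0; b0; b1; b0; b0];
[:: b0; b0; b1; b0; b0; b1; b0; b0; b1; b0; b1; b0; b1];
[:: b0; b0; b1; b0; b0; b1; b0; b0; b1; b1; b0; b1; b0];
[:: b0; b0; b1; b0; b0; b1; b0; b1; b0; b0; b0; b0];
[:: b0; b0; b1; b0; b0; b1; b1; b0; b1; b0; b0];
[:: b0; b0; b1; b0; b0; b1; b1; b0; b1; b1; b0];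
[:: b0; b0; b1; b0; b0; b1; b1; b0; b1; b1; b0; b1; b0];
[:: b0; b0; b1; b0; b0; b1; b1; b0; b1; b1; b1; b0; b1];
[:: b0; b0; b1; b0; b0; b1; b1; b1; b0; b0; b0; b0];
[:: b0; b0; b1; b0; b1; b0; b0; b0; b1; b0; b1; b0; b1];
[:: b0; b0; b1; b0; b1; b0; b0; b0; b1; b1; b0; b1; b0];
[:: b0; b0; b1; b0; b1; b0; b0; b1; b0; b0; b0; b0];
[:: b0; b0; b1; b0; b1; b0; b1; b0; b1; b1; b0];
[:: b0; b0; b1; b0; b1; b0; b1; b0; b1; b1; b0; b1; b0];
[:: b0; b0; b1; b0; b1; b0; b1; b0; b1; b1; b1; b0; b1];
[:: b0; b0; b1; b0; b1; b0; b1; b1; b0; b0; b0; b0];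
[:: b0; b0; b1; b0; b1; b1; b0; b0; b1; b0; b0];
[:: b0; b0; b1; b0; b1; b1; b0; b0; b1; b1; b0; b0; b1];
[:: b0; b0; b1; b0; b1; b1; b0; b0; b1; b1; b0; b1; b0];
[:: b0; b0; b1; b0; b1; b1; b0; b1; b0; b0; b0; b0];
[:: b0; b0; b1; b0; b1; b1; b1; b0; b1; b1; b0];
[:: b0; b0; b1; b0; b1; b1; b1; b0; b1; b1; b0; b1; b0];
[:: b0; b0; b1; b0; b1; b1; b1; b0; b1; b1; b1; b0; b1];
[:: b0; b0; b1; b0; b1; b1; b1; b1; b0; b0; b0; b0];
[:: b0; b0; b1; b1; b0; b0; b1; b0; b1; b1; b0];
[:: b0; b0; b1; b1; b0; b0; b1; b0; b1; b1; b0; b1; b0];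
[:: b0; b0; b1; b1; b0; b0; b1; b0; b1; b1; b1; b0; b1];
[:: b0; b0; b1; b1; b0; b0; b1; b1; b0; b0; b0; b0];
[:: b0; b0; b1; b1; b0; b1; b0; b0; b1; b0; b0];
[:: b0; b0; b1; b1; b0; b1; b0; b0; b1; b0; b1; b0; b1];
[:: b0; b0; b1; b1; b0; b1; b0; b0; b1; b1; b0; b1; b0];
[:: b0; b0; b1; b1; b0; b1; b0; b1; b0; b0; b0; b0];
[:: b0; b0; b1; b1; b0; b1; b1; b0; b1; b1; b0];
[:: b0; b0; b1; b1; b0; b1; b1; b0; b1; b1; b0; b1; b0];
[:: b0; b0; b1; b1; b0; b1; b1; b0; b1; b1; b1; b0; b1];
[:: b0; b0; b1; b1; b0; b1; b1; b1; b0; b0; b0; b0];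
[:: b0; b0; b1; b1; b0; b1; b1; b1; b0; b1; b0];
[:: b0; b0; b1; b1; b1; b0; b0; b0; b1; b0; b1; b0; b1];
[:: b0; b0; b1; b1; b1; b0; b0; b0; b1; b1; b0; b1; b0];
[:: b0; b0; b1; b1; b1; b0; b0; b1; b0; b0; b0; b0];
[:: b0; b0; b1; b1; b1; b0; b1; b0; b1; b1; b0];
[:: b0; b0; b1; b1; b1; b0; b1; b0; b1; b1; b0; b1; b0];
[:: b0; b0; b1; b1; b1; b0; b1; b0; b1; b1; b1; b0; b1];
[:: b0; b0; b1; b1; b1; b0; b1; b1; b0; b0; b0; b0];
[:: b0; b0; b1; b1; b1; b1; b0; b0; b1; b0; b0];
[:: b0; b0; b1; b1; b1; b1; b0; b0; b1; b1; b0; b0; b1];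
[:: b0; b0; b1; b1; b1; b1; b0; b0; b1; b1; b0; b1; b0];
[:: b0; b0; b1; b1; b1; b1; b0; b1; b0; b0; b0; b0];
[:: b0; b0; b1; b1; b1; b1; b1; b0; b1; b1; b0];
[:: b0; b0; b1; b1; b1; b1; b1; b0; b1; b1; b0; b1; b0];
[:: b0; b0; b1; b1; b1; b1; b1; b0; b1; b1; b1; b0; b1];
[:: b0; b0; b1; b1; b1; b1; b1; b1; b0; b0; b0; b0];
[:: b0; b1; b0; b0; b0; b1; b1; b0; b1; b0; b0];
[:: b0; b1; b0; b0; b1; b0; b0; b0; b1; b0; b1; b0; b1];
[:: b0; b1; b0; b0; b1; b0; b0; b0; b1; b1; b0; b1; b0];
[:: b0; b1; b0; b0; b1; b0; b0; b1; b0; b0; b0; b0];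
[:: b0; b1; b0; b0; b1; b0; b1; b0; b1; b1; b0];
[:: b0; b1; b0; b0; b1; b0; b1; b0; b1; b1; b0; b1; b0];
[:: b0; b1; b0; b0; b1; b0; b1; b0; b1; b1; b1; b0; b1];
[:: b0; b1; b0; b0; b1; b0; b1; b1; b0; b0; b0; b0];
[:: b0; b1; b0; b0; b1; b1; b0; b0; b1; b0; b0];
[:: b0; b1; b0; b0; b1; b1; b0; b0; b1; b1; b0; b0; b1];
[:: b0; b1; b0; b0; b1; b1; b0; b0; b1; b1; b0; b1; b0];
[:: b0; b1; b0; b0; b1; b1; b0; b1; b0; b0; b0; b0];
[:: b0; b1; b0; b0; b1; b1; b1; b0; b1; b1; b0];
[:: b0; b1; b0; b0; b1; b1; b1; b0; b1; b1; b0; b1; b0];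
[:: b0; b1; b0; b0; b1; b1; b1; b0; b1; b1; b1; b0; b1];
[:: b0; b1; b0; b0; b1; b1; b1; b1; b0; b0; b0; b0];
[:: b0; b1; b0; b1; b0; b0; b1; b0; b1; b1; b0];
[:: b0; b1; b0; b1; b0; b0; b1; b0; b1; b1; b0; b1; b0];
[:: b0; b1; b0; b1; b0; b0; b1; b0; b1; b1; b1; b0; b1];
[:: b0; b1; b0; b1; b0; b0; b1; b1; b0; b0; b0; b0];
[:: b0; b1; b0; b1; b0; b1; b0; b0; b1; b0; b0];
[:: b0; b1; b0; b1; b0; b1; b0; b0; b1; b0; b1; b0; b1];
[:: b0; b1; b0; b1; b0; b1; b0; b0; b1; b1; b0; b1; b0];
[:: b0; b1; b0; b1; b0; b1; b0; b1; b0; b0; b0; b0];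
[:: b0; b1; b0; b1; b0; b1; b1; b0; b1; b1; b0];
[:: b0; b1; b0; b1; b0; b1; b1; b0; b1; b1; b0; b1; b0];
[:: b0; b1; b0; b1; b0; b1; b1; b0; b1; b1; b1; b0; b1];
[:: b0; b1; b0; b1; b0; b1; b1; b1; b0; b0; b0; b0];
[:: b0; b1; b0; b1; b0; b1; b1; b1; b0; b1; b0];
[:: b0; b1; b0; b1; b1; b0; b0; b0; b1; b0; b1; b0; b1];
[:: b0; b1; b0; b1; b1; b0; b0; b0; b1; b1; b0; b1; b0];
[:: b0; b1; b0; b1; b1; b0; b0; b1; b0; b0; b0; b0];
[:: b0; b1; b0; b1; b1; b0; b1; b0; b1; b1; b0];
[:: b0; b1; b0; b1; b1; b0; b1; b0; b1; b1; b0; b1; b0];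
[:: b0; b1; b0; b1; b1; b0; b1; b0; b1; b1; b1; b0; b1];
[:: b0; b1; b0; b1; b1; b0; b1; b1; b0; b0; b0; b0];
[:: b0; b1; b0; b1; b1; b1; b0; b0; b1; b0; b0];
[:: b0; b1; b0; b1; b1; b1; b0; b0; b1; b1; b0; b0; b1];
[:: b0; b1; b0; b1; b1; b1; b0; b0; b1; b1; b0; b1; b0];
[:: b0; b1; b0; b1; b1; b1; b0; b1; b0; b0; b0; b0];
[:: b0; b1; b0; b1; b1; b1; b1; b0; b1; b1; b0];
[:: b0; b1; b0; b1; b1; b1; b1; b0; b1; b1; b0; b1; b0];
[:: b0; b1; b0; b1; b1; b1; b1; b0; b1; b1; b1; b0; b1];
[:: b0; b1; b0; b1; b1; b1; b1; b1; b0; b0; b0; b0];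
[:: b0; b1; b1; b0; b0; b1; b0; b0; b1; b0; b0];
[:: b0; b1; b1; b0; b0; b1; b0; b0; b1; b0; b1; b0; b1];
[:: b0; b1; b1; b0; b0; b1; b0; b0; b1; b1; b0; b1; b0];
[:: b0; b1; b1; b0; b0; b1; b0; b1; b0; b0; b0; b0];
[:: b0; b1; b1; b0; b0; b1; b1; b0; b1; b0; b0];
[:: b0; b1; b1; b0; b0; b1; b1; b0; b1; b1; b0];
[:: b0; b1; b1; b0; b0; b1; b1; b0; b1; b1; b0; b1; b0];
[:: b0; b1; b1; b0; b0; b1; b1; b0; b1; b1; b1; b0; b1];
[:: b0; b1; b1; b0; b0; b1; b1; b1; b0; b0; b0; b0];
[:: b0; b1; b1; b0; b1; b0; b0; b0; b1; b0; b1; b0; b1];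
[:: b0; b1; b1; b0; b1; b0; b0; b0; b1; b1; b0; b1; b0];
[:: b0; b1; b1; b0; b1; b0; b0; b1; b0; b0; b0; b0];
[:: b0; b1; b1; b0; b1; b0; b1; b0; b1; b1; b0];
[:: b0; b1; b1; b0; b1; b0; b1; b0; b1; b1; b0; b1; b0];
[:: b0; b1; b1; b0; b1; b0; b1; b0; b1; b1; b1; b0; b1];
[:: b0; b1; b1; b0; b1; b0; b1; b1; b0; b0; b0; b0];
[:: b0; b1; b1; b0; b1; b1; b0; b0];
[:: b0; b1; b1; b0; b1; b1; b0; b0; b1; b0; b0];
[:: b0; b1; b1; b0; b1; b1; b0; b0; b1; b1; b0; b0; b1];
[:: b0; b1; b1; b0; b1; b1; b0; b0; b1; b1; b0; b1; b0];
[:: b0; b1; b1; b0; b1; b1; b0; b1; b0; b0; b0; b0];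
[:: b0; b1; b1; b0; b1; b1; b1; b0; b1; b1; b0];
[:: b0; b1; b1; b0; b1; b1; b1; b0; b1; b1; b0; b1; b0];
[:: b0; b1; b1; b0; b1; b1; b1; b0; b1; b1; b1; b0; b1];
[:: b0; b1; b1; b0; b1; b1; b1; b1; b0; b0; b0; b0];
[:: b0; b1; b1; b1; b0; b0; b1; b0; b1; b1; b0];
[:: b0; b1; b1; b1; b0; b0; b1; b0; b1; b1; b0; b1; b0];
[:: b0; b1; b1; b1; b0; b0; b1; b0; b1; b1; b1; b0; b1];
[:: b0; b1; b1; b1; b0; b0; b1; b1; b0; b0; b0; b0];
[:: b0; b1; b1; b1; b0; b1; b0; b0; b1; b0; b0];
[:: b0; b1; b1; b1; b0; b1; b0; b0; b1; b0; b1; b0; b1];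
[:: b0; b1; b1; b1; b0; b1; b0; b0; b1; b1; b0; b1; b0];
[:: b0; b1; b1; b1; b0; b1; b0; b1; b0; b0; b0; b0];
[:: b0; b1; b1; b1; b0; b1; b1; b0; b1; b1; b0];
[:: b0; b1; b1; b1; b0; b1; b1; b0; b1; b1; b0; b1; b0];
[:: b0; b1; b1; b1; b0; b1; b1; b0; b1; b1; b1; b0; b1];
[:: b0; b1; b1; b1; b0; b1; b1; b1; b0; b0; b0; b0];
[:: b0; b1; b1; b1; b0; b1; b1; b1; b0; b1; b0];
[:: b0; b1; b1; b1; b1; b0; b0; b0; b1; b0; b1; b0; b1];
[:: b0; b1; b1; b1; b1; b0; b0; b0; b1; b1; b0; b1; b0];
[:: b0; b1; b1; b1; b1; b0; b0; b1; b0; b0; b0; b0];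
[:: b0; b1; b1; b1; b1; b0; b1; b0; b1; b1; b0];
[:: b0; b1; b1; b1; b1; b0; b1; b0; b1; b1; b0; b1; b0];
[:: b0; b1; b1; b1; b1; b0; b1; b0; b1; b1; b1; b0; b1];
[:: b0; b1; b1; b1; b1; b0; b1; b1; b0; b0; b0; b0];
[:: b0; b1; b1; b1; b1; b1; b0; b0; b1; b0; b0];
[:: b0; b1; b1; b1; b1; b1; b0; b0; b1; b1; b0; b0; b1];
[:: b0; b1; b1; b1; b1; b1; b0; b0; b1; b1; b0; b1; b0];
[:: b0; b1; b1; b1; b1; b1; b0; b1; b0; b0; b0; b0];
[:: b0; b1; b1; b1; b1; b1; b1; b0; b1; b1; b0];
[:: b0; b1; b1; b1; b1; b1; b1; b0; b1; b1; b0; b1; b0];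
[:: b0; b1; b1; b1; b1; b1; b1; b0; b1; b1; b1; b0; b1];
[:: b0; b1; b1; b1; b1; b1; b1; b1; b0; b0; b0; b0];
[:: b1; b0; b0; b0; b0; b1; b0; b1; b0; b1];
[:: b1; b0; b0; b0; b0; b1; b0; b1; b0; b1; b0];
[:: b1; b0; b0; b0; b0; b1; b1; b0; b1; b0];
[:: b1; b0; b0; b0; b1; b0; b0; b0; b0];
[:: b1; b0; b0; b0; b1; b0; b0; b0; b1; b0; b1; b0; b1];
[:: b1; b0; b0; b0; b1; b0; b0; b0; b1; b1; b0; b1; b0];
[:: b1; b0; b0; b0; b1; b0; b0; b1; b0; b0];
[:: b1; b0; b0; b0; b1; b0; b0; b1; b0; b0; b0; b0];
[:: b1; b0; b0; b0; b1; b0; b0; b1; b0; b1; b0; b1];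
[:: b1; b0; b0; b0; b1; b0; b0; b1; b1; b0; b1; b0];
[:: b1; b0; b0; b0; b1; b0; b1; b0; b0; b0; b0];
[:: b1; b0; b0; b0; b1; b0; b1; b0; b1];
[:: b1; b0; b0; b0; b1; b0; b1; b0; b1; b1; b0];
[:: b1; b0; b0; b0; b1; b0; b1; b0; b1; b1; b0; b1; b0];
[:: b1; b0; b0; b0; b1; b0; b1; b0; b1; b1; b1; b0; b1];
[:: b1; b0; b0; b0; b1; b0; b1; b1; b0];
[:: b1; b0; b0; b0; b1; b0; b1; b1; b0; b0; b0; b0];
[:: b1; b0; b0; b0; b1; b0; b1; b1; b0; b1; b0];
[:: b1; b0; b0; b0; b1; b0; b1; b1; b1; b0; b1];
[:: b1; b0; b0; b0; b1; b1; b0; b0; b0; b0];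
[:: b1; b0; b0; b0; b1; b1; b0; b0; b1; b0; b0];
[:: b1; b0; b0; b0; b1; b1; b0; b0; b1; b1; b0; b0; b1];
[:: b1; b0; b0; b0; b1; b1; b0; b0; b1; b1; b0; b1; b0];
[:: b1; b0; b0; b0; b1; b1; b0; b1; b0];
[:: b1; b0; b0; b0; b1; b1; b0; b1; b0; b0];
[:: b1; b0; b0; b0; b1; b1; b0; b1; b0; b0; b0; b0];
[:: b1; b0; b0; b0; b1; b1; b0; b1; b1; b0];
[:: b1; b0; b0; b0; b1; b1; b0; b1; b1; b0; b1; b0];
[:: b1; b0; b0; b0; b1; b1; b0; b1; b1; b1; b0; b1];
[:: b1; b0; b0; b0; b1; b1; b1; b0; b0; b0; b0];
[:: b1; b0; b0; b0; b1; b1; b1; b0; b1; b1; b0];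
[:: b1; b0; b0; b0; b1; b1; b1; b0; b1; b1; b0; b1; b0];
[:: b1; b0; b0; b0; b1; b1; b1; b0; b1; b1; b1; b0; b1];
[:: b1; b0; b0; b0; b1; b1; b1; b1; b0; b0; b0; b0];
[:: b1; b0; b0; b1; b0; b0];
[:: b1; b0; b0; b1; b0; b0; b0; b0];
[:: b1; b0; b0; b1; b0; b0; b0; b1; b0; b1; b0; b1];
[:: b1; b0; b0; b1; b0; b0; b0; b1; b1; b0; b1; b0];
[:: b1; b0; b0; b1; b0; b0; b1; b0; b0];
[:: b1; b0; b0; b1; b0; b0; b1; b0; b0; b0; b0];
[:: b1; b0; b0; b1; b0; b0; b1; b0; b1; b0; b1];
[:: b1; b0; b0; b1; b0; b0; b1; b0; b1; b1; b0];
[:: b1; b0; b0; b1; b0; b0; b1; b0; b1; b1; b0; b1; b0];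
[:: b1; b0; b0; b1; b0; b0; b1; b0; b1; b1; b1; b0; b1];
[:: b1; b0; b0; b1; b0; b0; b1; b1; b0; b0; b0; b0];
[:: b1; b0; b0; b1; b0; b0; b1; b1; b0; b1; b0];
[:: b1; b0; b0; b1; b0; b1; b0; b0; b0; b0];
[:: b1; b0; b0; b1; b0; b1; b0; b0; b1; b0; b0];
[:: b1; b0; b0; b1; b0; b1; b0; b0; b1; b0; b1; b0; b1];
[:: b1; b0; b0; b1; b0; b1; b0; b0; b1; b1; b0; b1; b0];
[:: b1; b0; b0; b1; b0; b1; b0; b1];
[:: b1; b0; b0; b1; b0; b1; b0; b1; b0; b0; b0; b0];
[:: b1; b0; b0; b1; b0; b1; b0; b1; b1; b0];
[:: b1; b0; b0; b1; b0; b1; b0; b1; b1; b0; b1; b0];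
[:: b1; b0; b0; b1; b0; b1; b0; b1; b1; b1; b0; b1];
[:: b1; b0; b0; b1; b0; b1; b1; b0];
[:: b1; b0; b0; b1; b0; b1; b1; b0; b0; b0; b0];
[:: b1; b0; b0; b1; b0; b1; b1; b0; b1; b0];
[:: b1; b0; b0; b1; b0; b1; b1; b0; b1; b1; b0];
[:: b1; b0; b0; b1; b0; b1; b1; b0; b1; b1; b0; b1; b0];
[:: b1; b0; b0; b1; b0; b1; b1; b0; b1; b1; b1; b0; b1];
[:: b1; b0; b0; b1; b0; b1; b1; b1; b0; b0; b0; b0];
[:: b1; b0; b0; b1; b0; b1; b1; b1; b0; b1];
[:: b1; b0; b0; b1; b0; b1; b1; b1; b0; b1; b0];
[:: b1; b0; b0; b1; b1; b0; b0; b0; b0];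
[:: b1; b0; b0; b1; b1; b0; b0; b0; b1; b0; b1; b0; b1];
[:: b1; b0; b0; b1; b1; b0; b0; b0; b1; b1; b0; b1; b0];
[:: b1; b0; b0; b1; b1; b0; b0; b1; b0; b0];
[:: b1; b0; b0; b1; b1; b0; b0; b1; b0; b0; b0; b0];
[:: b1; b0; b0; b1; b1; b0; b0; b1; b1; b0; b0; b1];
[:: b1; b0; b0; b1; b1; b0; b0; b1; b1; b0; b1; b0];
[:: b1; b0; b0; b1; b1; b0; b1; b0];
[:: b1; b0; b0; b1; b1; b0; b1; b0; b0];
[:: b1; b0; b0; b1; b1; b0; b1; b0; b0; b0; b0];
[:: b1; b0; b0; b1; b1; b0; b1; b0; b1; b1; b0];
[:: b1; b0; b0; b1; b1; b0; b1; b0; b1; b1; b0; b1; b0];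
[:: b1; b0; b0; b1; b1; b0; b1; b0; b1; b1; b1; b0; b1];
[:: b1; b0; b0; b1; b1; b0; b1; b1; b0];
[:: b1; b0; b0; b1; b1; b0; b1; b1; b0; b0; b0; b0];
[:: b1; b0; b0; b1; b1; b0; b1; b1; b0; b1; b0];
[:: b1; b0; b0; b1; b1; b0; b1; b1; b1; b0; b1];
[:: b1; b0; b0; b1; b1; b1; b0; b0; b0; b0];
[:: b1; b0; b0; b1; b1; b1; b0; b0; b1; b0; b0];
[:: b1; b0; b0; b1; b1; b1; b0; b0; b1; b1; b0; b0; b1];
[:: b1; b0; b0; b1; b1; b1; b0; b0; b1; b1; b0; b1; b0];
[:: b1; b0; b0; b1; b1; b1; b0; b1; b0; b0; b0; b0];
[:: b1; b0; b0; b1; b1; b1; b0; b1; b1; b0];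
[:: b1; b0; b0; b1; b1; b1; b0; b1; b1; b0; b1; b0];
[:: b1; b0; b0; b1; b1; b1; b0; b1; b1; b1; b0; b1];
[:: b1; b0; b0; b1; b1; b1; b1; b0; b0; b0; b0];
[:: b1; b0; b0; b1; b1; b1; b1; b0; b1; b1; b0];
[:: b1; b0; b0; b1; b1; b1; b1; b0; b1; b1; b0; b1; b0];
[:: b1; b0; b0; b1; b1; b1; b1; b0; b1; b1; b1; b0; b1];
[:: b1; b0; b0; b1; b1; b1; b1; b1; b0; b0; b0; b0];
[:: b1; b0; b1; b0; b0; b0; b0];
[:: b1; b0; b1; b0; b0; b0; b1; b0; b1; b0; b1];
[:: b1; b0; b1; b0; b0; b0; b1; b1; b0; b1; b0];
[:: b1; b0; b1; b0; b0; b1; b0; b0];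
[:: b1; b0; b1; b0; b0; b1; b0; b0; b0; b0];
[:: b1; b0; b1; b0; b0; b1; b0; b0; b1; b0; b0];
[:: b1; b0; b1; b0; b0; b1; b0; b0; b1; b0; b1; b0; b1];
[:: b1; b0; b1; b0; b0; b1; b0; b0; b1; b1; b0; b1; b0];
[:: b1; b0; b1; b0; b0; b1; b0; b1; b0; b0; b0; b0];
[:: b1; b0; b1; b0; b0; b1; b0; b1; b0; b1];
[:: b1; b0; b1; b0; b0; b1; b0; b1; b1; b0];
[:: b1; b0; b1; b0; b0; b1; b0; b1; b1; b0; b1; b0];
[:: b1; b0; b1; b0; b0; b1; b0; b1; b1; b1; b0; b1];
[:: b1; b0; b1; b0; b0; b1; b1; b0; b0; b0; b0];
[:: b1; b0; b1; b0; b0; b1; b1; b0; b1; b0];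
[:: b1; b0; b1; b0; b0; b1; b1; b0; b1; b0; b0];
[:: b1; b0; b1; b0; b0; b1; b1; b0; b1; b1; b0];
[:: b1; b0; b1; b0; b0; b1; b1; b0; b1; b1; b0; b1; b0];
[:: b1; b0; b1; b0; b0; b1; b1; b0; b1; b1; b1; b0; b1];
[:: b1; b0; b1; b0; b0; b1; b1; b1; b0; b0; b0; b0];
[:: b1; b0; b1; b0; b1; b0; b0; b0; b0];
[:: b1; b0; b1; b0; b1; b0; b0; b0; b1; b0; b1; b0; b1];
[:: b1; b0; b1; b0; b1; b0; b0; b0; b1; b1; b0; b1; b0];
[:: b1; b0; b1; b0; b1; b0; b0; b1; b0; b0];
[:: b1; b0; b1; b0; b1; b0; b0; b1; b0; b0; b0; b0];
[:: b1; b0; b1; b0; b1; b0; b0; b1; b0; b1; b0; b1];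
[:: b1; b0; b1; b0; b1; b0; b0; b1; b1; b0; b1; b0];
[:: b1; b0; b1; b0; b1; b0; b1; b0; b0; b0; b0];
[:: b1; b0; b1; b0; b1; b0; b1; b0; b1; b1; b0];
[:: b1; b0; b1; b0; b1; b0; b1; b0; b1; b1; b0; b1; b0];
[:: b1; b0; b1; b0; b1; b0; b1; b0; b1; b1; b1; b0; b1];
[:: b1; b0; b1; b0; b1; b0; b1; b1; b0];
[:: b1; b0; b1; b0; b1; b0; b1; b1; b0; b0; b0; b0];
[:: b1; b0; b1; b0; b1; b0; b1; b1; b0; b1; b0];
[:: b1; b0; b1; b0; b1; b0; b1; b1; b1; b0; b1];
[:: b1; b0; b1; b0; b1; b1; b0];
[:: b1; b0; b1; b0; b1; b1; b0; b0; b0; b0];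
[:: b1; b0; b1; b0; b1; b1; b0; b0; b1; b0; b0];
[:: b1; b0; b1; b0; b1; b1; b0; b0; b1; b1; b0; b0; b1];
[:: b1; b0; b1; b0; b1; b1; b0; b0; b1; b1; b0; b1; b0];
[:: b1; b0; b1; b0; b1; b1; b0; b1; b0];
[:: b1; b0; b1; b0; b1; b1; b0; b1; b0; b0; b0; b0];
[:: b1; b0; b1; b0; b1; b1; b0; b1; b1; b0];
[:: b1; b0; b1; b0; b1; b1; b0; b1; b1; b0; b1; b0];
[:: b1; b0; b1; b0; b1; b1; b0; b1; b1; b1; b0; b1];
[:: b1; b0; b1; b0; b1; b1; b1; b0; b0; b0; b0];
[:: b1; b0; b1; b0; b1; b1; b1; b0; b1];
[:: b1; b0; b1; b0; b1; b1; b1; b0; b1; b0];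
[:: b1; b0; b1; b0; b1; b1; b1; b0; b1; b1; b0];
[:: b1; b0; b1; b0; b1; b1; b1; b0; b1; b1; b0; b1; b0];
[:: b1; b0; b1; b0; b1; b1; b1; b0; b1; b1; b1; b0; b1];
[:: b1; b0; b1; b0; b1; b1; b1; b1; b0; b0; b0; b0];
[:: b1; b0; b1; b1; b0];
[:: b1; b0; b1; b1; b0; b0; b0; b0];
[:: b1; b0; b1; b1; b0; b0; b0; b1; b0; b1; b0; b1];
[:: b1; b0; b1; b1; b0; b0; b0; b1; b1; b0; b1; b0];
[:: b1; b0; b1; b1; b0; b0; b1; b0; b0];
[:: b1; b0; b1; b1; b0; b0; b1; b0; b0; b0; b0];
[:: b1; b0; b1; b1; b0; b0; b1; b0; b1; b1; b0];
[:: b1; b0; b1; b1; b0; b0; b1; b0; b1; b1; b0; b1; b0];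
[:: b1; b0; b1; b1; b0; b0; b1; b0; b1; b1; b1; b0; b1];
[:: b1; b0; b1; b1; b0; b0; b1; b1; b0; b0; b0; b0];
[:: b1; b0; b1; b1; b0; b0; b1; b1; b0; b0; b1];
[:: b1; b0; b1; b1; b0; b0; b1; b1; b0; b1; b0];
[:: b1; b0; b1; b1; b0; b1; b0];
[:: b1; b0; b1; b1; b0; b1; b0; b0; b0; b0];
[:: b1; b0; b1; b1; b0; b1; b0; b0; b1; b0; b0];
[:: b1; b0; b1; b1; b0; b1; b0; b0; b1; b0; b1; b0; b1];
[:: b1; b0; b1; b1; b0; b1; b0; b0; b1; b1; b0; b1; b0];
[:: b1; b0; b1; b1; b0; b1; b0; b1; b0; b0; b0; b0];
[:: b1; b0; b1; b1; b0; b1; b0; b1; b1; b0];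
[:: b1; b0; b1; b1; b0; b1; b0; b1; b1; b0; b1; b0];
[:: b1; b0; b1; b1; b0; b1; b0; b1; b1; b1; b0; b1];
[:: b1; b0; b1; b1; b0; b1; b1; b0];
[:: b1; b0; b1; b1; b0; b1; b1; b0; b0; b0; b0];
[:: b1; b0; b1; b1; b0; b1; b1; b0; b1; b0];
[:: b1; b0; b1; b1; b0; b1; b1; b0; b1; b1; b0];
[:: b1; b0; b1; b1; b0; b1; b1; b0; b1; b1; b0; b1; b0];
[:: b1; b0; b1; b1; b0; b1; b1; b0; b1; b1; b1; b0; b1];
[:: b1; b0; b1; b1; b0; b1; b1; b1; b0; b0; b0; b0];
[:: b1; b0; b1; b1; b0; b1; b1; b1; b0; b1];
[:: b1; b0; b1; b1; b0; b1; b1; b1; b0; b1; b0];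
[:: b1; b0; b1; b1; b1; b0; b0; b0; b0];
[:: b1; b0; b1; b1; b1; b0; b0; b0; b1; b0; b1; b0; b1];
[:: b1; b0; b1; b1; b1; b0; b0; b0; b1; b1; b0; b1; b0];
[:: b1; b0; b1; b1; b1; b0; b0; b1; b0; b0];
[:: b1; b0; b1; b1; b1; b0; b0; b1; b0; b0; b0; b0];
[:: b1; b0; b1; b1; b1; b0; b0; b1; b1; b0; b0; b1];
[:: b1; b0; b1; b1; b1; b0; b0; b1; b1; b0; b1; b0];
[:: b1; b0; b1; b1; b1; b0; b1];
[:: b1; b0; b1; b1; b1; b0; b1; b0; b0; b0; b0];
[:: b1; b0; b1; b1; b1; b0; b1; b0; b1; b1; b0];
[:: b1; b0; b1; b1; b1; b0; b1; b0; b1; b1; b0; b1; b0];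
[:: b1; b0; b1; b1; b1; b0; b1; b0; b1; b1; b1; b0; b1];
[:: b1; b0; b1; b1; b1; b0; b1; b1; b0];
[:: b1; b0; b1; b1; b1; b0; b1; b1; b0; b0; b0; b0];
[:: b1; b0; b1; b1; b1; b0; b1; b1; b0; b1; b0];
[:: b1; b0; b1; b1; b1; b0; b1; b1; b1; b0; b1];
[:: b1; b0; b1; b1; b1; b1; b0; b0; b0; b0];
[:: b1; b0; b1; b1; b1; b1; b0; b0; b1; b0; b0];
[:: b1; b0; b1; b1; b1; b1; b0; b0; b1; b1; b0; b0; b1];
[:: b1; b0; b1; b1; b1; b1; b0; b0; b1; b1; b0; b1; b0];
[:: b1; b0; b1; b1; b1; b1; b0; b1; b0; b0; b0; b0];
[:: b1; b0; b1; b1; b1; b1; b0; b1; b1; b0];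
[:: b1; b0; b1; b1; b1; b1; b0; b1; b1; b0; b1; b0];
[:: b1; b0; b1; b1; b1; b1; b0; b1; b1; b1; b0; b1];
[:: b1; b0; b1; b1; b1; b1; b1; b0; b0; b0; b0];
[:: b1; b0; b1; b1; b1; b1; b1; b0; b1; b1; b0];
[:: b1; b0; b1; b1; b1; b1; b1; b0; b1; b1; b0; b1; b0];
[:: b1; b0; b1; b1; b1; b1; b1; b0; b1; b1; b1; b0; b1];
[:: b1; b0; b1; b1; b1; b1; b1; b1; b0; b0; b0; b0];
[:: b1; b1; b0; b0; b0; b0];
[:: b1; b1; b0; b0; b0; b1; b0; b1; b0; b1];
[:: b1; b1; b0; b0; b0; b1; b1; b0; b1; b0];
[:: b1; b1; b0; b0; b0; b1; b1; b0; b1; b0; b0];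
[:: b1; b1; b0; b0; b1; b0; b0];
[:: b1; b1; b0; b0; b1; b0; b0; b0; b0];
[:: b1; b1; b0; b0; b1; b0; b0; b0; b1; b0; b1; b0; b1];
[:: b1; b1; b0; b0; b1; b0; b0; b0; b1; b1; b0; b1; b0];
[:: b1; b1; b0; b0; b1; b0; b0; b1; b0; b0];
[:: b1; b1; b0; b0; b1; b0; b0; b1; b0; b0; b0; b0];
[:: b1; b1; b0; b0; b1; b0; b0; b1; b0; b1; b0; b1];
[:: b1; b1; b0; b0; b1; b0; b0; b1; b1; b0; b1; b0];
[:: b1; b1; b0; b0; b1; b0; b1; b0; b0; b0; b0];
[:: b1; b1; b0; b0; b1; b0; b1; b0; b1; b1; b0];
[:: b1; b1; b0; b0; b1; b0; b1; b0; b1; b1; b0; b1; b0];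
[:: b1; b1; b0; b0; b1; b0; b1; b0; b1; b1; b1; b0; b1];
[:: b1; b1; b0; b0; b1; b0; b1; b1; b0];
[:: b1; b1; b0; b0; b1; b0; b1; b1; b0; b0; b0; b0];
[:: b1; b1; b0; b0; b1; b0; b1; b1; b0; b1; b0];
[:: b1; b1; b0; b0; b1; b0; b1; b1; b1; b0; b1];
[:: b1; b1; b0; b0; b1; b1; b0; b0; b0; b0];
[:: b1; b1; b0; b0; b1; b1; b0; b0; b1];
[:: b1; b1; b0; b0; b1; b1; b0; b0; b1; b0; b0];
[:: b1; b1; b0; b0; b1; b1; b0; b0; b1; b1; b0; b0; b1];
[:: b1; b1; b0; b0; b1; b1; b0; b0; b1; b1; b0; b1; b0];
[:: b1; b1; b0; b0; b1; b1; b0; b1; b0];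
[:: b1; b1; b0; b0; b1; b1; b0; b1; b0; b0];
[:: b1; b1; b0; b0; b1; b1; b0; b1; b0; b0; b0; b0];
[:: b1; b1; b0; b0; b1; b1; b0; b1; b1; b0];
[:: b1; b1; b0; b0; b1; b1; b0; b1; b1; b0; b1; b0];
[:: b1; b1; b0; b0; b1; b1; b0; b1; b1; b1; b0; b1];
[:: b1; b1; b0; b0; b1; b1; b1; b0; b0; b0; b0];
[:: b1; b1; b0; b0; b1; b1; b1; b0; b1; b1; b0];
[:: b1; b1; b0; b0; b1; b1; b1; b0; b1; b1; b0; b1; b0];
[:: b1; b1; b0; b0; b1; b1; b1; b0; b1; b1; b1; b0; b1];
[:: b1; b1; b0; b0; b1; b1; b1; b1; b0; b0; b0; b0];
[:: b1; b1; b0; b1; b0; b0; b0; b0];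
[:: b1; b1; b0; b1; b0; b0; b0; b1; b0; b1; b0; b1];
[:: b1; b1; b0; b1; b0; b0; b0; b1; b1; b0; b1; b0];
[:: b1; b1; b0; b1; b0; b0; b1; b0; b0];
[:: b1; b1; b0; b1; b0; b0; b1; b0; b0; b0; b0];
[:: b1; b1; b0; b1; b0; b0; b1; b0; b1; b0; b1];
[:: b1; b1; b0; b1; b0; b0; b1; b0; b1; b1; b0];
[:: b1; b1; b0; b1; b0; b0; b1; b0; b1; b1; b0; b1; b0];
[:: b1; b1; b0; b1; b0; b0; b1; b0; b1; b1; b1; b0; b1];
[:: b1; b1; b0; b1; b0; b0; b1; b1; b0; b0; b0; b0];
[:: b1; b1; b0; b1; b0; b0; b1; b1; b0; b1; b0];
[:: b1; b1; b0; b1; b0; b1; b0; b0; b0; b0];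
[:: b1; b1; b0; b1; b0; b1; b0; b0; b1; b0; b0];
[:: b1; b1; b0; b1; b0; b1; b0; b0; b1; b0; b1; b0; b1];
[:: b1; b1; b0; b1; b0; b1; b0; b0; b1; b1; b0; b1; b0];
[:: b1; b1; b0; b1; b0; b1; b0; b1; b0; b0; b0; b0];
[:: b1; b1; b0; b1; b0; b1; b0; b1; b1; b0];
[:: b1; b1; b0; b1; b0; b1; b0; b1; b1; b0; b1; b0];
[:: b1; b1; b0; b1; b0; b1; b0; b1; b1; b1; b0; b1];
[:: b1; b1; b0; b1; b0; b1; b1; b0];
[:: b1; b1; b0; b1; b0; b1; b1; b0; b0; b0; b0];
[:: b1; b1; b0; b1; b0; b1; b1; b0; b1; b0];
[:: b1; b1; b0; b1; b0; b1; b1; b0; b1; b1; b0];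
[:: b1; b1; b0; b1; b0; b1; b1; b0; b1; b1; b0; b1; b0];
[:: b1; b1; b0; b1; b0; b1; b1; b0; b1; b1; b1; b0; b1];
[:: b1; b1; b0; b1; b0; b1; b1; b1; b0; b0; b0; b0];
[:: b1; b1; b0; b1; b0; b1; b1; b1; b0; b1];
[:: b1; b1; b0; b1; b0; b1; b1; b1; b0; b1; b0];
[:: b1; b1; b0; b1; b1; b0];
[:: b1; b1; b0; b1; b1; b0; b0; b0; b0];
[:: b1; b1; b0; b1; b1; b0; b0; b0; b1; b0; b1; b0; b1];
[:: b1; b1; b0; b1; b1; b0; b0; b0; b1; b1; b0; b1; b0];
[:: b1; b1; b0; b1; b1; b0; b0; b1; b0; b0];
[:: b1; b1; b0; b1; b1; b0; b0; b1; b0; b0; b0; b0];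
[:: b1; b1; b0; b1; b1; b0; b0; b1; b1; b0; b0; b1];
[:: b1; b1; b0; b1; b1; b0; b0; b1; b1; b0; b1; b0];
[:: b1; b1; b0; b1; b1; b0; b1; b0];
[:: b1; b1; b0; b1; b1; b0; b1; b0; b0; b0; b0];
[:: b1; b1; b0; b1; b1; b0; b1; b0; b1; b1; b0];
[:: b1; b1; b0; b1; b1; b0; b1; b0; b1; b1; b0; b1; b0];
[:: b1; b1; b0; b1; b1; b0; b1; b0; b1; b1; b1; b0; b1];
[:: b1; b1; b0; b1; b1; b0; b1; b1; b0];
[:: b1; b1; b0; b1; b1; b0; b1; b1; b0; b0; b0; b0];
[:: b1; b1; b0; b1; b1; b0; b1; b1; b0; b1; b0];
[:: b1; b1; b0; b1; b1; b0; b1; b1; b1; b0; b1];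
[:: b1; b1; b0; b1; b1; b1; b0; b0; b0; b0];
[:: b1; b1; b0; b1; b1; b1; b0; b0; b1; b0; b0];
[:: b1; b1; b0; b1; b1; b1; b0; b0; b1; b1; b0; b0; b1];
[:: b1; b1; b0; b1; b1; b1; b0; b0; b1; b1; b0; b1; b0];
[:: b1; b1; b0; b1; b1; b1; b0; b1];
[:: b1; b1; b0; b1; b1; b1; b0; b1; b0];
[:: b1; b1; b0; b1; b1; b1; b0; b1; b0; b0; b0; b0];
[:: b1; b1; b0; b1; b1; b1; b0; b1; b1; b0];
[:: b1; b1; b0; b1; b1; b1; b0; b1; b1; b0; b1; b0];
[:: b1; b1; b0; b1; b1; b1; b0; b1; b1; b1; b0; b1];
[:: b1; b1; b0; b1; b1; b1; b1; b0; b0; b0; b0];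
[:: b1; b1; b0; b1; b1; b1; b1; b0; b1; b1; b0];
[:: b1; b1; b0; b1; b1; b1; b1; b0; b1; b1; b0; b1; b0];
[:: b1; b1; b0; b1; b1; b1; b1; b0; b1; b1; b1; b0; b1];
[:: b1; b1; b0; b1; b1; b1; b1; b1; b0; b0; b0; b0];
[:: b1; b1; b1; b0; b0; b0; b0];
[:: b1; b1; b1; b0; b0; b0; b1; b0; b1; b0; b1];
[:: b1; b1; b1; b0; b0; b0; b1; b1; b0; b1; b0];
[:: b1; b1; b1; b0; b0; b1; b0; b0];
[:: b1; b1; b1; b0; b0; b1; b0; b0; b0; b0];
[:: b1; b1; b1; b0; b0; b1; b0; b0; b1; b0; b0];
[:: b1; b1; b1; b0; b0; b1; b0; b0; b1; b0; b1; b0; b1];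
[:: b1; b1; b1; b0; b0; b1; b0; b0; b1; b1; b0; b1; b0];
[:: b1; b1; b1; b0; b0; b1; b0; b1; b0; b0; b0; b0];
[:: b1; b1; b1; b0; b0; b1; b0; b1; b1; b0];
[:: b1; b1; b1; b0; b0; b1; b0; b1; b1; b0; b1; b0];
[:: b1; b1; b1; b0; b0; b1; b0; b1; b1; b1; b0; b1];
[:: b1; b1; b1; b0; b0; b1; b1; b0; b0; b0; b0];
[:: b1; b1; b1; b0; b0; b1; b1; b0; b0; b1];
[:: b1; b1; b1; b0; b0; b1; b1; b0; b1; b0];
[:: b1; b1; b1; b0; b0; b1; b1; b0; b1; b0; b0];
[:: b1; b1; b1; b0; b0; b1; b1; b0; b1; b1; b0];
[:: b1; b1; b1; b0; b0; b1; b1; b0; b1; b1; b0; b1; b0];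
[:: b1; b1; b1; b0; b0; b1; b1; b0; b1; b1; b1; b0; b1];
[:: b1; b1; b1; b0; b0; b1; b1; b1; b0; b0; b0; b0];
[:: b1; b1; b1; b0; b1; b0; b0; b0; b0];
[:: b1; b1; b1; b0; b1; b0; b0; b0; b1; b0; b1; b0; b1];
[:: b1; b1; b1; b0; b1; b0; b0; b0; b1; b1; b0; b1; b0];
[:: b1; b1; b1; b0; b1; b0; b0; b1; b0; b0];
[:: b1; b1; b1; b0; b1; b0; b0; b1; b0; b0; b0; b0];
[:: b1; b1; b1; b0; b1; b0; b0; b1; b0; b1; b0; b1];
[:: b1; b1; b1; b0; b1; b0; b0; b1; b1; b0; b1; b0];
[:: b1; b1; b1; b0; b1; b0; b1; b0; b0; b0; b0];
[:: b1; b1; b1; b0; b1; b0; b1; b0; b1; b1; b0];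
[:: b1; b1; b1; b0; b1; b0; b1; b0; b1; b1; b0; b1; b0];
[:: b1; b1; b1; b0; b1; b0; b1; b0; b1; b1; b1; b0; b1];
[:: b1; b1; b1; b0; b1; b0; b1; b1; b0];
[:: b1; b1; b1; b0; b1; b0; b1; b1; b0; b0; b0; b0];
[:: b1; b1; b1; b0; b1; b0; b1; b1; b0; b1; b0];
[:: b1; b1; b1; b0; b1; b0; b1; b1; b1; b0; b1];
[:: b1; b1; b1; b0; b1; b1; b0];
[:: b1; b1; b1; b0; b1; b1; b0; b0; b0; b0];
[:: b1; b1; b1; b0; b1; b1; b0; b0; b1; b0; b0];
[:: b1; b1; b1; b0; b1; b1; b0; b0; b1; b1; b0; b0; b1];
[:: b1; b1; b1; b0; b1; b1; b0; b0; b1; b1; b0; b1; b0];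
[:: b1; b1; b1; b0; b1; b1; b0; b1; b0];
[:: b1; b1; b1; b0; b1; b1; b0; b1; b0; b0; b0; b0];
[:: b1; b1; b1; b0; b1; b1; b0; b1; b1; b0];
[:: b1; b1; b1; b0; b1; b1; b0; b1; b1; b0; b1; b0];
[:: b1; b1; b1; b0; b1; b1; b0; b1; b1; b1; b0; b1];
[:: b1; b1; b1; b0; b1; b1; b1; b0; b0; b0; b0];
[:: b1; b1; b1; b0; b1; b1; b1; b0; b1];
[:: b1; b1; b1; b0; b1; b1; b1; b0; b1; b0];
[:: b1; b1; b1; b0; b1; b1; b1; b0; b1; b1; b0];
[:: b1; b1; b1; b0; b1; b1; b1; b0; b1; b1; b0; b1; b0];
[:: b1; b1; b1; b0; b1; b1; b1; b0; b1; b1; b1; b0; b1];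
[:: b1; b1; b1; b0; b1; b1; b1; b1; b0; b0; b0; b0];
[:: b1; b1; b1; b1; b0; b0; b0; b0];
[:: b1; b1; b1; b1; b0; b0; b0; b1; b0; b1; b0; b1];
[:: b1; b1; b1; b1; b0; b0; b0; b1; b1; b0; b1; b0];
[:: b1; b1; b1; b1; b0; b0; b1; b0; b0];
[:: b1; b1; b1; b1; b0; b0; b1; b0; b0; b0; b0];
[:: b1; b1; b1; b1; b0; b0; b1; b0; b1; b1; b0];
[:: b1; b1; b1; b1; b0; b0; b1; b0; b1; b1; b0; b1; b0];
[:: b1; b1; b1; b1; b0; b0; b1; b0; b1; b1; b1; b0; b1];
[:: b1; b1; b1; b1; b0; b0; b1; b1; b0; b0; b0; b0];
[:: b1; b1; b1; b1; b0; b0; b1; b1; b0; b0; b1];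
[:: b1; b1; b1; b1; b0; b0; b1; b1; b0; b1; b0];
[:: b1; b1; b1; b1; b0; b1; b0; b0; b0; b0];
[:: b1; b1; b1; b1; b0; b1; b0; b0; b1; b0; b0];
[:: b1; b1; b1; b1; b0; b1; b0; b0; b1; b0; b1; b0; b1];
[:: b1; b1; b1; b1; b0; b1; b0; b0; b1; b1; b0; b1; b0];
[:: b1; b1; b1; b1; b0; b1; b0; b1; b0; b0; b0; b0];
[:: b1; b1; b1; b1; b0; b1; b0; b1; b1; b0];
[:: b1; b1; b1; b1; b0; b1; b0; b1; b1; b0; b1; b0];
[:: b1; b1; b1; b1; b0; b1; b0; b1; b1; b1; b0; b1];
[:: b1; b1; b1; b1; b0; b1; b1; b0];
[:: b1; b1; b1; b1; b0; b1; b1; b0; b0; b0; b0];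
[:: b1; b1; b1; b1; b0; b1; b1; b0; b1; b0];
[:: b1; b1; b1; b1; b0; b1; b1; b0; b1; b1; b0];
[:: b1; b1; b1; b1; b0; b1; b1; b0; b1; b1; b0; b1; b0];
[:: b1; b1; b1; b1; b0; b1; b1; b0; b1; b1; b1; b0; b1];
[:: b1; b1; b1; b1; b0; b1; b1; b1; b0; b0; b0; b0];
[:: b1; b1; b1; b1; b0; b1; b1; b1; b0; b1];
[:: b1; b1; b1; b1; b0; b1; b1; b1; b0; b1; b0];
[:: b1; b1; b1; b1; b1; b0; b0; b0; b0];
[:: b1; b1; b1; b1; b1; b0; b0; b0; b1; b0; b1; b0; b1];
[:: b1; b1; b1; b1; b1; b0; b0; b0; b1; b1; b0; b1; b0];
[:: b1; b1; b1; b1; b1; b0; b0; b1; b0; b0];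
[:: b1; b1; b1; b1; b1; b0; b0; b1; b0; b0; b0; b0];
[:: b1; b1; b1; b1; b1; b0; b0; b1; b1; b0; b0; b1];
[:: b1; b1; b1; b1; b1; b0; b0; b1; b1; b0; b1; b0];
[:: b1; b1; b1; b1; b1; b0; b1; b0; b0; b0; b0];
[:: b1; b1; b1; b1; b1; b0; b1; b0; b1; b1; b0];
[:: b1; b1; b1; b1; b1; b0; b1; b0; b1; b1; b0; b1; b0];
[:: b1; b1; b1; b1; b1; b0; b1; b0; b1; b1; b1; b0; b1];
[:: b1; b1; b1; b1; b1; b0; b1; b1; b0];
[:: b1; b1; b1; b1; b1; b0; b1; b1; b0; b0; b0; b0];
[:: b1; b1; b1; b1; b1; b0; b1; b1; b0; b1; b0];
[:: b1; b1; b1; b1; b1; b0; b1; b1; b1; b0; b1];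
[:: b1; b1; b1; b1; b1; b1; b0; b0; b0; b0];
[:: b1; b1; b1; b1; b1; b1; b0; b0; b1; b0; b0];
[:: b1; b1; b1; b1; b1; b1; b0; b0; b1; b1; b0; b0; b1];
[:: b1; b1; b1; b1; b1; b1; b0; b0; b1; b1; b0; b1; b0];
[:: b1; b1; b1; b1; b1; b1; b0; b1; b0; b0; b0; b0];
[:: b1; b1; b1; b1; b1; b1; b0; b1; b1; b0];
[:: b1; b1; b1; b1; b1; b1; b0; b1; b1; b0; b1; b0];
[:: b1; b1; b1; b1; b1; b1; b0; b1; b1; b1; b0; b1];
[:: b1; b1; b1; b1; b1; b1; b1; b0; b0; b0; b0];
[:: b1; b1; b1; b1; b1; b1; b1; b0; b1; b1; b0];
[:: b1; b1; b1; b1; b1; b1; b1; b0; b1; b1; b0; b1; b0];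
[:: b1; b1; b1; b1; b1; b1; b1; b0; b1; b1; b1; b0; b1];
[:: b1; b1; b1; b1; b1; b1; b1; b1; b0; b0; b0; b0]].

Definition good (c : seq bool) (lead : bool) (d : seq bool) (trail : bool) : bool :=
  let win := c ++ P1000 ++ d in
  has (occurs_at P0000 win) (iota 0 (size win))
  || has (fun p => (lead ==> (0 < p)) && occurs_at P1000 win p) (iota 0 (size c))
  || [&& lead, trail, c == [:: true; false; false] & d == [::]]
  || has (fun bp => (size bp == size win) && ltb bp win && domok lead trail bp win) table.

Definition leadcs := [seq c <- flatten [seq allbits k | k <- iota 1 7] | head false c].

Definition all_ok :=
  all (fun c => all (fun d => good c false d false) (allbits 2)
             && all (fun d => good c false d true) (allbits 0 ++ allbits 1)) (allbits 7)
  && all (fun c => all (fun d => good c true d false) (allbits 2)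
             && all (fun d => good c true d true) (allbits 0 ++ allbits 1)) leadcs.

Lemma all_ok_true : all_ok = true.
Proof. vm_compute. reflexivity. Qed.


Definition val (s : seq bool) := foldl (fun a (b : bool) => a.*2 + b) 0 s.

Lemma app_cat s t p : app (s ++ t) p = app t (app s p).
Proof. by rewrite /app foldl_cat. Qed.

Lemma app_rcons s b p : app (rcons s b) p = step b (app s p).
Proof. by rewrite /app foldl_rcons. Qed.

Lemma val_rcons s (b : bool) : val (rcons s b) = (val s).*2 + b.
Proof. by rewrite /val foldl_rcons. Qed.

Lemma app_stern s : app s (0,1) = (stern (val s), stern (val s).+1).
Proof.
elim/last_ind: s => [|s b IH] //.
rewrite app_rcons val_rcons IH /step; case: b => /=.
- by rewrite addn1 stern_odd -doubleS stern_even.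
- by rewrite addn0 stern_odd stern_even.
Qed.

Lemma foldl_val t a : foldl (fun a (b : bool) => a.*2 + b) a t = a * 2 ^ size t + val t.
Proof.
elim: t a => [|b t IH] a /=; first by rewrite muln1 addn0.
rewrite /val /= IH [in RHS]IH expnS -!muln2; move: (2 ^ size t) (nat_of_bool b) => X B; nia.
Qed.

Lemma val_cat s t : val (s ++ t) = val s * 2 ^ size t + val t.
Proof. by rewrite /val foldl_cat foldl_val. Qed.

Lemma val_lt s : val s < 2 ^ size s.
Proof.
elim/last_ind: s => [|s b IH] //.
rewrite val_rcons size_rcons expnS -muln2; case: b => /=; move: (2 ^ size s) IH => X; lia.
Qed.

Lemma ltb_val a b : size a = size b -> ltb a b -> val a < val b.
Proof.
elim: a b => [|x a IH] [|y b] //= [Hs] /orP [/andP [Hx Hy]|/andP [/eqP Hxy Hl]].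
- rewrite -[x :: a]cat1s -[y :: b]cat1s !val_cat /=.
  move: (val_lt a); rewrite Hs; case: x Hx => //; case: y Hy => //= _ _.
  rewrite (_ : val [:: false] = 0) // (_ : val [:: true] = 1) //.
  move: (2 ^ size b) => X; lia.
- rewrite -[x :: a]cat1s -[y :: b]cat1s !val_cat /= Hxy Hs.
  move: (IH b Hs Hl); move: (2 ^ size b) (val [:: y]) => X Y; nia.
Qed.

Lemma ltb_val_cat p a b q : size a = size b -> ltb a b ->
  val (p ++ a ++ q) < val (p ++ b ++ q).
Proof.
move=> Hs Hl; rewrite !val_cat !size_cat Hs.
have H := ltb_val Hs Hl.
rewrite !expnD !mulnA; set X := 2 ^ size q; set Y := 2 ^ size b.
have HX : 0 < X by rewrite expn_gt0.
nia.
Qed.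

Lemma bin_fuel0 k : bin_fuel k 0 = [::].
Proof. by case: k. Qed.

Lemma bin_fuel_ok k n : 0 < n <= k ->
  val (bin_fuel k n) = n /\ exists t, bin_fuel k n = true :: t.
Proof.
elim: k n => [|k IH] n; first by lia.
move=> /andP [Hn Hk] /=; case: n Hn Hk => // n _ Hk.
have Hd := odd_double_half n.+1.
case E: (n.+1)./2 => [|m].
  have n0 : n = 0 by move: Hd; rewrite E /=; case: (odd n) => /=; lia.
  by subst n; rewrite bin_fuel0; split; [by [] | by exists [::]].
have [IH1 [t Ht]] : val (bin_fuel k m.+1) = m.+1 /\ exists t, bin_fuel k m.+1 = true :: t.
  by apply: IH; rewrite -E; move: Hd Hk; rewrite -!muln2; lia.
split; first by rewrite val_rcons IH1 -E addnC.
by rewrite Ht; exists (rcons t (odd n.+1)).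
Qed.

Lemma binrep_ok h : 0 < h -> val (binrep h) = h /\ exists t, binrep h = true :: t.
Proof.
move=> Hh; rewrite /binrep ifF; last by case: h Hh.
by apply: bin_fuel_ok; rewrite Hh leqnn.
Qed.

Lemma app_add s a b c d :
  app s (a + c, b + d) = ((app s (a,b)).1 + (app s (c,d)).1, (app s (a,b)).2 + (app s (c,d)).2).
Proof.
elim: s a b c d => [|x s IH] a b c d //=.
case: x => /=.
- by rewrite (_ : a + c + (b + d) = (a + b) + (c + d)) ?IH //; lia.
- by rewrite (_ : a + c + (b + d) = (a + b) + (c + d)) ?IH //; lia.
Qed.

Lemma app_scale s k a b :
  app s (k * a, k * b) = (k * (app s (a,b)).1, k * (app s (a,b)).2).
Proof.
elim: s a b => [|x s IH] a b //=.
case: x => /=; by rewrite -mulnDr IH.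
Qed.

Lemma app_lin s u v :
  app s (u, v) = (u * (app s (1,0)).1 + v * (app s (0,1)).1,
                  u * (app s (1,0)).2 + v * (app s (0,1)).2).
Proof.
have -> : (u, v) = (u * 1 + v * 0, u * 0 + v * 1) by rewrite !muln0 !muln1 addn0.
by rewrite app_add !app_scale /= ?muln0 ?muln1 ?addn0 ?add0n.
Qed.

Lemma app_mono s u v u' v' : u <= u' -> v <= v' ->
  (app s (u,v)).1 <= (app s (u',v')).1 /\ (app s (u,v)).2 <= (app s (u',v')).2.
Proof.
elim: s u v u' v' => [|x s IH] u v u' v' Hu Hv //=.
by case: x => /=; apply: IH => //; apply: leq_add.
Qed.

Lemma val_binrep h : val (binrep h) = h.
Proof. by case: h => [|h] //; case: (binrep_ok (ltn0Sn h)). Qed.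

Lemma gep_lin trail bp b u v :
  gep trail (app bp (1,0)) (app b (1,0)) -> gep trail (app bp (0,1)) (app b (0,1)) ->
  gep trail (app bp (u,v)) (app b (u,v)).
Proof.
rewrite /gep; case: trail.
- by move=> H1 H2; rewrite (app_lin bp u v) (app_lin b u v) /=; apply: leq_add; apply: leq_mul.
- move=> /andP [H1 H2] /andP [H3 H4]; rewrite (app_lin bp u v) (app_lin b u v) /=; apply/andP; split;
  by apply: leq_add; apply: leq_mul.
Qed.

Lemma repl h w b bp z lead trail :
  record_setter h -> binrep h = w ++ b ++ z -> size bp = size b -> ltb bp b ->
  domok lead trail bp b -> (lead -> w = [::]) -> (trail -> z = [::]) -> False.
Proof.
move=> Hr Hx Hs Hl /andP [Hd1 Hd2] Hlead Htr.
have Hv : val (w ++ b ++ z) = h by rewrite -Hx val_binrep.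
have Hlt : val (w ++ bp ++ z) < h by rewrite -Hv; apply: ltb_val_cat.
have := Hr _ Hlt; rewrite /stern_s -Hv.
have E1 : stern (val (w ++ bp ++ z)).+1 = (app (w ++ bp ++ z) (0,1)).2 by rewrite app_stern.
have E2 : stern (val (w ++ b ++ z)).+1 = (app (w ++ b ++ z) (0,1)).2 by rewrite app_stern.
rewrite E1 E2 !app_cat.
have G : gep trail (app bp (app w (0,1))) (app b (app w (0,1))).
  case: lead Hd2 Hlead => [_ -> //|Hd2 _].
  by case: (app w (0,1)) => u v; apply: gep_lin.
move: G; rewrite /gep; clear Hd1 Hd2; case: trail Htr => [-> //=|_]; first by rewrite ltnNge => ->.
move=> /andP [G1 G2].
case: (app_mono z G1 G2) => _ H.
move: H; rewrite -!surjective_pairing ltnNge => ->.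
by [].
Qed.

Lemma occP (pat x : seq bool) j :
  reflect (exists a b, x = a ++ pat ++ b /\ size a = j) (occurs_at pat x j).
Proof.
apply: (iffP andP).
- move=> [Hs /eqP Ht]; exists (take j x), (drop (j + size pat) x); split.
  + by rewrite -{1}(cat_take_drop j x) -{1}(cat_take_drop (size pat) (drop j x)) Ht drop_drop addnC.
  + by rewrite size_take; case: ltnP => //; move: Hs; lia.
- move=> [a [b [-> <-]]]; split.
  + by rewrite !size_cat; lia.
  + by rewrite drop_size_cat // take_size_cat.
Qed.

Lemma occ_win pat win j a b : occurs_at pat win j -> occurs_at pat (a ++ win ++ b) (size a + j).
Proof.
move/occP=> [a1 [b1 [-> <-]]]; apply/occP.
exists (a ++ a1), (b1 ++ b); split; last by rewrite size_cat.
by rewrite -!catA.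
Qed.

Lemma zeros_one (x : seq bool) : nth false x 0 = true ->
  forall a b, x = a ++ P0000 ++ b -> exists a' b', x = a' ++ [:: true; false; false; false; false] ++ b'.
Proof.
move=> Hx a; elim/last_ind: a => [|a c IH] b Hab; first by rewrite Hab in Hx.
case: c Hab => Hab.
- by exists a, b; rewrite Hab cat_rcons.
- apply: (IH (false :: b)); rewrite Hab cat_rcons //.
Qed.

Lemma no10000 h a b : record_setter h -> binrep h = a ++ [:: true; false; false; false; false] ++ b -> False.
Proof.
move=> Hr Hx.
by apply: (@repl h a _ [:: false; true; false; true; false] b false false Hr Hx).
Qed.

Definition exc := [:: true; false; false; true; false; false; false].

Lemma case_lemma h w c d z0 (lead trail : bool) :
  record_setter h -> nth false (binrep h) 0 = true ->
  binrep h = w ++ (c ++ P1000 ++ d) ++ z0 ->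
  (lead -> w = [::]) -> (~~ lead -> 0 < size w) -> (trail -> z0 = [::]) ->
  good c lead d trail ->
  (forall j, j < size w + size c -> 0 < j -> occurs_at P1000 (binrep h) j -> binrep h = exc) ->
  binrep h = exc.
Proof.
move=> Hr Hh Hx Hl Hnl Ht.
rewrite /good => /orP [/orP [/orP [/hasP [p _ Hp]|/hasP [p Hp /andP [Hlp Hocc]]]|Hexc]|/hasP [bp _ Hbp]] IH.
- have := occ_win w z0 Hp; rewrite -Hx => /occP [a [b [Hab _]]].
  by case: (zeros_one Hh Hab) => a' [b' Hab']; case: (no10000 Hr Hab').
- apply: (IH (size w + p)).
  + by rewrite mem_iota in Hp; rewrite ltn_add2l; case/andP: Hp.
  + case: lead Hl Hnl Hlp => [Hw _ Hp0|_ H _]; first by rewrite Hw. by move: (H isT); lia.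
  + by rewrite Hx; apply: occ_win.
- case/and4P: Hexc => Hle Htr /eqP Hc /eqP Hd.
  by rewrite Hx (Hl Hle) (Ht Htr) Hc Hd.
- case/andP: Hbp => /andP [/eqP Hs Hlt] Hd.
  by case: (repl Hr Hx Hs Hlt Hd Hl Ht).
Qed.

Lemma mem_allbits s : s \in allbits (size s).
Proof.
elim: s => [|x s IH] //=.
have Hi (b : bool) : injective (cons b) by move=> u v [].
by rewrite !mem_cat; case: x; rewrite (mem_map (Hi _)) IH ?orbT.
Qed.

Lemma main_ind h : record_setter h ->
  forall i, 0 < i -> occurs_at P1000 (binrep h) i -> binrep h = exc.
Proof.
move=> Hr i; elim/ltn_ind: i => i IH Hi Hocc.
have Hh : 0 < h.
  case: h Hr IH Hocc => [|h'] //= _ _.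
  by case/andP; rewrite /binrep /= => H; lia.
case: (binrep_ok Hh) => _ [t Ht].
have Hhd : nth false (binrep h) 0 = true by rewrite Ht.
have Hok := all_ok_true; rewrite /all_ok in Hok; case/andP: Hok => /allP HNL /allP HLD.
case/occP: (Hocc) => y [z [Hx Hy]].
have [d [z0 [Hz [trail [Htr Hd]]]]] : exists d z0, z = d ++ z0 /\ exists trail : bool,
       (trail -> z0 = [::]) /\ (d \in if trail then allbits 0 ++ allbits 1 else allbits 2).
  case: (leqP (size z) 1) => Hsz.
  - exists z, [::]; split; first by rewrite cats0.
    exists true; split => //; rewrite mem_cat.
    by case: (size z) Hsz (mem_allbits z) => [|[|]] // _ ->; rewrite ?orbT.
  - exists (take 2 z), (drop 2 z); split; first by rewrite cat_take_drop.
    exists false; split => //.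
    by move: (mem_allbits (take 2 z)); rewrite size_takel.
have [w [c [Hyc [lead [Hl [Hnl Hc]]]]]] : exists w c, y = w ++ c /\ exists lead : bool,
    (lead -> w = [::]) /\ (~~ lead -> 0 < size w) /\ (c \in if lead then leadcs else allbits 7).
  case: (leqP (size y) 7) => Hsy.
  - exists [::], y; split => //; exists true; do 2 split => //.
    rewrite /leadcs mem_filter; apply/andP; split.
    + case: y Hx Hy Hsy => [|y0 y'] Hx Hy Hsy; first by rewrite -Hy in Hi.
      by move: Hx; rewrite Ht /= => [[<-]].
    + apply/flatten_mapP; exists (size y); last exact: mem_allbits.
      by rewrite mem_iota; lia.
  - exists (take (size y - 7) y), (drop (size y - 7) y); split; first by rewrite cat_take_drop.
    exists false; split => //; split => [_|].
    + by rewrite size_takel; lia.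
    + have E7 : size (drop (size y - 7) y) = 7 by rewrite size_drop; lia.
      by move: (mem_allbits (drop (size y - 7) y)); rewrite E7.
apply: (@case_lemma h w c d z0 lead trail Hr Hhd) => //.
- by rewrite Hx Hyc Hz -!catA.
- case: lead Hc Hl Hnl => Hc _ _; [move: (HLD c Hc) | move: (HNL c Hc)] => /andP [/allP H1 /allP H2];
  by case: trail Htr Hd => _ Hd; [apply: H2 | apply: H1].
- by move=> j Hj; apply: IH; rewrite -Hy Hyc size_cat.
Qed.


Theorem mainTheorem8 (h : nat) :
  record_setter h ->
  binrep h <> [:: true; false; false; true; false; false; false] ->
  forall i : nat, occurs_at [:: true; false; false; false] (binrep h) i -> i = 0.
Proof.
move=> Hr Hne [|i] // Hocc.
by case: Hne; apply: (main_ind Hr (i := i.+1)).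
Qed.
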